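(* For every reduced strategy $\sigma\in\mathcal S$, $$\sum_{a\in\mathcal A(\sigma)}\frac{1}{\beta(a)}=1.$$
   Context: Game tree: $V$ is the node set of a finite rooted tree with root $r$ and leaf set $L$; $C(v)$ denotes the set of children of $v$ and $p(v)$ the parent of $v\ne r$. The internal nodes are partitioned into infosets $N$ and actions $\mathcal A$ with $r\in N$, $C(v)\subseteq\mathcal A$ and $|C(v)|>1$ for $v\in N$, and $C(a)\subseteq N\cup L$ for $a\in\mathcal A$. A strategy is $\sigma:N\to V$ with $\sigma(v)\in C(v)$. For a strategy $\sigma$, $V(\sigma)$ is the smallest subset of $V$ containing $r$, containing $\sigma(v)$ for each $v\in N\cap V(\sigma)$, and containing $C(a)$ for each $a\in\mathcal A\cap V(\sigma)$; the reduced strategy is its restriction to $N\cap V(\sigma)$; $\mathcal S$ is the set of reduced strategies and $\mathcal A(\sigma):=\mathcal A\cap V(\sigma)$. Define $m:N\cup\mathcal A\to\mathbb N$ recursively from the bottom by $m(a)=1+\sum_{v\in C(a)\cap N}m(v)$ for $a\in\mathcal A$ and $m(v)=\sum_{a\in C(v)}m(a)$ for $v\in N$. Define $\beta:N\cup\mathcal A\to\mathbb R$ from the top by $\beta(r)=1$, $\beta(a)=m(a)\beta(p(a))$ for $a\in\mathcal A$, and $\beta(v)=\beta(p(v))/m(v)$ for $v\in N\setminus\{r\}$. *)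

(* Defs.v *)
From HB Require Import structures.
From mathcomp Require Import all_boot all_order all_algebra.
Set Implicit Arguments. Unset Strict Implicit. Unset Printing Implicit Defensive.
Import Order.TTheory GRing.Theory Num.Theory.

(* A finite rooted tree on the node type V (a finType) with root r is given by
   a parent map p : V -> V with the convention p r = r; see [rooted_tree]. *)

Definition children (V : finType) (r : V) (p : V -> V) (v : V) : {set V} :=
  [set w | (w != r) && (p w == v)].

Definition leaves (V : finType) (r : V) (p : V -> V) : {set V} :=
  [set v | children r p v == set0].

(* p r = r and every node reaches the root by iterating the parent map
   (so the parent relation is acyclic: this is a rooted tree). *)
Definition rooted_tree (V : finType) (r : V) (p : V -> V) : Prop :=
  p r = r /\ forall v : V, exists k : nat, iter k p v = r.

(* The game tree axioms: internal nodes partitioned into infosets N and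
   actions A, r in N, C(v) ⊆ A and |C(v)| > 1 for v in N,
   C(a) ⊆ N ∪ L for a in A. *)
Definition game_tree (V : finType) (r : V) (p : V -> V) (N A : {set V}) : Prop :=
  rooted_tree r p /\
  r \in N /\
  N :&: A = set0 /\
  (forall v : V, (v \in N :|: A) = (children r p v != set0)) /\
  (forall v : V, v \in N -> children r p v \subset A /\ 1 < #|children r p v|) /\
  (forall a : V, a \in A -> children r p a \subset N :|: leaves r p).

Definition strategy (V : finType) (r : V) (p : V -> V) (N : {set V})
  (sigma : V -> V) : Prop :=
  forall v : V, v \in N -> sigma v \in children r p v.

Definition closed_for (V : finType) (r : V) (p : V -> V) (N A : {set V})
  (sigma : V -> V) (S : {set V}) : bool :=
  [&& r \in S,
      [forall v in N :&: S, sigma v \in S]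
    & [forall a in A :&: S, children r p a \subset S]].

Definition Vsigma (V : finType) (r : V) (p : V -> V) (N A : {set V})
  (sigma : V -> V) : {set V} :=
  [set x | [forall S : {set V}, closed_for r p N A sigma S ==> (x \in S)]].

Definition Asigma (V : finType) (r : V) (p : V -> V) (N A : {set V})
  (sigma : V -> V) : {set V} := A :&: Vsigma r p N A sigma.

(* m, defined recursively from the bottom; fuel k (tree height < #|V|). *)
Fixpoint m_fuel (V : finType) (r : V) (p : V -> V) (N A : {set V})
  (k : nat) (v : V) : nat :=
  match k with
  | 0 => 0
  | k'.+1 =>
    if v \in A then (1 + \sum_(w in children r p v :&: N) m_fuel r p N A k' w)%N
    else (\sum_(w in children r p v) m_fuel r p N A k' w)%N
  end.

Definition mval (V : finType) (r : V) (p : V -> V) (N A : {set V}) (v : V) : nat :=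
  m_fuel r p N A #|V| v.

(* beta, defined recursively from the top; fuel k (depth < #|V|). *)
Fixpoint beta_fuel (R : fieldType) (V : finType) (r : V) (p : V -> V)
  (N A : {set V}) (k : nat) (v : V) : R :=
  match k with
  | 0 => 1
  | k'.+1 =>
    if v == r then 1
    else if v \in A then (mval r p N A v)%:R * beta_fuel R r p N A k' (p v)
    else beta_fuel R r p N A k' (p v) / (mval r p N A v)%:R
  end%R.

Definition beta (R : fieldType) (V : finType) (r : V) (p : V -> V)
  (N A : {set V}) (v : V) : R := beta_fuel R r p N A #|V| v.

(* Main.v *)
Require Import Defs.
From HB Require Import structures.
From mathcomp Require Import all_boot all_order all_algebra zify ring lra.
Import Order.TTheory GRing.Theory Num.Theory.
Set Implicit Arguments. Unset Strict Implicit.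

Lemma depth_bound (V : finType) (r : V) (p : V -> V) :
  rooted_tree r p -> forall y d, (forall j, j < d -> iter j p y != r) -> d < #|V|.
Proof.
move=> [pr ex] y d Hd.
pose f (i : 'I_d.+1) : V := if (i : nat) < d then iter i p y else r.
have inj : injective f.
  move=> i j; rewrite /f.
  case: ltnP => hi; case: ltnP => hj => E; apply/val_inj => /=.
  - apply/eqP; apply/negPn/negP => nij.
    wlog lij : i j hi hj E nij / (i < j)%N.
      move=> W; case: (ltngtP i j) => c; first exact: (W i j).
      - by apply: (W j i) => //; rewrite eq_sym.
      - by rewrite c eqxx in nij.
    have per : forall t, iter (t + i) p y = iter (t + j) p y.
      by move=> t; rewrite !iterD E.
    have never : forall n, iter n p y != r.
      elim/ltn_ind => n IH.
      case: (ltnP n d) => hn; first exact: Hd.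
      have -> : n = (n - j) + j by rewrite subnK // ltnW // (leq_trans hj).
      rewrite -per; apply: IH.
      have := ltn_ord j; lia.
    have [k Hk] := ex y; by move: (never k); rewrite Hk eqxx.
  - by move: (Hd _ hi); rewrite E eqxx.
  - by move: (Hd _ hj); rewrite -E eqxx.
  - have := ltn_ord i; have := ltn_ord j; lia.
have := leq_card f inj; by rewrite card_ord.
Qed.

Fixpoint reach (V : finType) (r : V) (p : V -> V) (k : nat) (x y : V) : Prop :=
  match k with
  | 0 => x = y
  | k'.+1 => exists c, c \in children r p x /\ reach r p k' c y
  end.

Lemma reach_iter (V : finType) (r : V) (p : V -> V) k : forall x y,
  reach r p k x y -> iter k p y = x /\ (forall j, j < k -> iter j p y != r).
Proof.
elim: k => [|k IH] x y /=; first by move=> ->.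
move=> [c [hc /IH [E1 E2]]].
move: hc; rewrite inE => /andP [cr /eqP pc].
split; first by rewrite /= E1.
move=> j; rewrite ltnS leq_eqVlt => /orP [/eqP ->|]; first by rewrite E1.
exact: E2.
Qed.

Lemma m_stab (V : finType) (r : V) (p : V -> V) (N A : {set V}) k :
  forall x j, (forall y, ~ reach r p k x y) -> m_fuel r p N A (k + j) x = m_fuel r p N A k x.
Proof.
elim: k => [|k IH] x j H; first by case: (H x).
rewrite addSn /=.
have E : forall c, c \in children r p x -> m_fuel r p N A (k + j) c = m_fuel r p N A k c.
  move=> c hc; apply: IH => y hy; apply: (H y); by exists c.
case: (x \in A).
  congr (_ + _)%N; apply: eq_bigr => c; rewrite inE => /andP [hc _]; exact: E.
apply: eq_bigr => c hc; exact: E.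
Qed.

Lemma beta_stab (R : fieldType) (V : finType) (r : V) (p : V -> V) (N A : {set V}) k :
  forall x j, (forall d, (forall i, i < d -> iter i p x != r) -> d < k) ->
  beta_fuel R r p N A (k + j) x = beta_fuel R r p N A k x.
Proof.
elim: k => [|k IH] x j H; first by have := H 0 (fun i (hi : i < 0) => False_ind _ (notF hi)).
rewrite addSn /=; case: eqP => // /eqP xr.
rewrite IH //.
move=> d Hd; have := H d.+1; rewrite ltnS; apply.
move=> [|i] hi //; rewrite iterSr; exact: Hd.
Qed.

Lemma cardV_pos (V : finType) (r : V) : exists n, #|V| = n.+1.
Proof. have : 0 < #|V| by apply/card_gt0P; exists r. by case: #|V| => // n _; exists n. Qed.

Lemma m_pos (V : finType) (r : V) (p : V -> V) (N A : {set V}) x :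
  game_tree r p N A -> x \in N :|: A -> 0 < mval r p N A x.
Proof.
move=> [rt [rN [NA [int [Nch Ach]]]]].
rewrite /mval.
have [n En] := cardV_pos r; rewrite En /=.
case: ifP => xA // xin.
move: xin; rewrite inE xA orbF => xN.
have [chA ch1] := Nch x xN.
have [c hc] : exists c, c \in children r p x.
  by apply/set0Pn; rewrite -card_gt0 (ltn_trans _ ch1).
have cA : c \in A by apply: (subsetP chA).
have n1 : 0 < n.
  have : #|children r p x| <= #|V| by apply: max_card.
  rewrite En; lia.
rewrite (bigD1 c) //=; case: n n1 {En} => // n _ /=; by rewrite cA.
Qed.

Lemma no_long_reach (V : finType) (r : V) (p : V -> V) n w y :
  rooted_tree r p -> #|V| = n.+1 -> w != r -> ~ reach r p n w y.
Proof.
move=> rt En wr /reach_iter [E1 E2].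
suff: n.+1 < #|V| by rewrite En ltnn.
apply: (depth_bound rt (y := y)) => j; rewrite ltnS leq_eqVlt => /orP [/eqP ->|]; first by rewrite E1.
exact: E2.
Qed.

Lemma m_rec (V : finType) (r : V) (p : V -> V) (N A : {set V}) a :
  game_tree r p N A -> a \in A ->
  mval r p N A a = (1 + \sum_(w in children r p a :&: N) mval r p N A w)%N.
Proof.
move=> [rt _] aA.
rewrite /mval; have [n En] := cardV_pos r; rewrite En.
rewrite [in LHS]/= aA.
congr (_ + _)%N; apply: eq_bigr => w; rewrite !inE => /andP [/andP [wr _] _].
have := @m_stab V r p N A n w 1 (fun y => no_long_reach (y:=y) rt En wr).
by rewrite addn1 => ->.
Qed.

Lemma beta_r (R : fieldType) (V : finType) (r : V) (p : V -> V) (N A : {set V}) :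
  beta R r p N A r = 1%R.
Proof. rewrite /beta; have [n En] := cardV_pos r; by rewrite En /= eqxx. Qed.

Lemma beta_rec (R : fieldType) (V : finType) (r : V) (p : V -> V) (N A : {set V}) x :
  rooted_tree r p -> x != r ->
  beta R r p N A x = (if x \in A then (mval r p N A x)%:R * beta R r p N A (p x)
    else beta R r p N A (p x) / (mval r p N A x)%:R)%R.
Proof.
move=> rt xr; rewrite /beta; have [n En] := cardV_pos r; rewrite En [in LHS]/= (negbTE xr).
have -> : beta_fuel R r p N A n.+1 (p x) = beta_fuel R r p N A n (p x).
  rewrite -addn1 beta_stab // => d Hd.
  have := depth_bound rt (d := d.+1) (y := x); rewrite En ltnS; apply.
  by move=> [|i] hi //; rewrite iterSr; apply: Hd.
by [].
Qed.

Lemma parent_internal (V : finType) (r : V) (p : V -> V) (N A : {set V}) x :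
  game_tree r p N A -> x != r -> p x \in N :|: A.
Proof.
move=> [_ [_ [_ [int _]]]] xr; rewrite int; apply/set0Pn; exists x.
by rewrite inE xr eqxx.
Qed.

Lemma beta_fuel_ne0 (R : numFieldType) (V : finType) (r : V) (p : V -> V) (N A : {set V}) k :
  game_tree r p N A -> forall x, x \in N :|: A -> beta_fuel R r p N A k x != 0%R.
Proof.
move=> G; elim: k => [|k IH] x xi /=; first by rewrite oner_eq0.
case xr0: (x == r); first by rewrite oner_eq0.
have xr : x != r by rewrite xr0.

have hp := IH _ (parent_internal G xr).
have hm : ((mval r p N A x)%:R : R)%R != 0%R by rewrite pnatr_eq0 -lt0n m_pos.
case: ifP => _; first exact: mulf_neq0.
by rewrite mulf_neq0 // invr_neq0.
Qed.

Lemma Vs_closed (V : finType) (r : V) (p : V -> V) (N A : {set V}) sigma :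
  closed_for r p N A sigma (Vsigma r p N A sigma).
Proof.
apply/and3P; split.
- by rewrite inE; apply/forallP => S; apply/implyP => /and3P [].
- apply/forallP => v; apply/implyP; rewrite !inE => /andP [vN /forallP vS].
  apply/forallP => S; apply/implyP => cS.
  move: (vS S); rewrite cS /= => vinS.
  case/and3P: cS => _ /forallP /(_ v); by rewrite inE vN vinS.
- apply/forallP => a; apply/implyP; rewrite !inE => /andP [aA /forallP aS].
  apply/subsetP => w wc; rewrite inE.
  apply/forallP => S; apply/implyP => cS.
  move: (aS S); rewrite cS /= => ainS.
  case/and3P: cS => _ _ /forallP /(_ a); rewrite inE aA ainS /= => /subsetP; apply.
  exact: wc.
Qed.

Lemma Vs_min (V : finType) (r : V) (p : V -> V) (N A : {set V}) sigma S x :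
  closed_for r p N A sigma S -> x \in Vsigma r p N A sigma -> x \in S.
Proof. by move=> cS; rewrite inE => /forallP /(_ S); rewrite cS. Qed.

Lemma Vs_r (V : finType) (r : V) (p : V -> V) (N A : {set V}) sigma :
  r \in Vsigma r p N A sigma.
Proof. by case/and3P: (Vs_closed r p N A sigma). Qed.

Lemma Vs_sigma (V : finType) (r : V) (p : V -> V) (N A : {set V}) sigma v :
  v \in N -> v \in Vsigma r p N A sigma -> sigma v \in Vsigma r p N A sigma.
Proof.
move=> vN vV; case/and3P: (Vs_closed r p N A sigma) => _ /forallP /(_ v).
by rewrite inE vN vV.
Qed.

Lemma Vs_child (V : finType) (r : V) (p : V -> V) (N A : {set V}) sigma a w :
  a \in A -> a \in Vsigma r p N A sigma -> w \in children r p a ->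
  w \in Vsigma r p N A sigma.
Proof.
move=> aA aV wc; case/and3P: (Vs_closed r p N A sigma) => _ _ /forallP /(_ a).
by rewrite inE aA aV /= => /subsetP; apply.
Qed.

Lemma Vs_parent (V : finType) (r : V) (p : V -> V) (N A : {set V}) sigma x :
  game_tree r p N A -> strategy r p N sigma ->
  x \in Vsigma r p N A sigma -> x != r ->
  p x \in Vsigma r p N A sigma /\ (p x \in N -> x = sigma (p x)).
Proof.
move=> [rt [rN [NA _]]] st.
have hr := Vs_r r p N A sigma.
have hs : forall v, v \in N -> v \in Vsigma r p N A sigma -> sigma v \in Vsigma r p N A sigma.
  by move=> v; apply: Vs_sigma.
have hc : forall a w, a \in A -> a \in Vsigma r p N A sigma -> w \in children r p a ->
  w \in Vsigma r p N A sigma by move=> a w; apply: Vs_child.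
have hmin : forall S x, closed_for r p N A sigma S -> x \in Vsigma r p N A sigma -> x \in S.
  by move=> S y; apply: Vs_min.
move: (Vsigma r p N A sigma) hr hs hc hmin => Vs hr hs hc hmin xV xr.
pose S := [set y | (y \in Vs) && ((y == r) || ((p y \in Vs) && ((p y \in N) ==> (y == sigma (p y)))))].
have cS : closed_for r p N A sigma S.
  apply/and3P; split.
  - by rewrite inE hr eqxx.
  - apply/forallP => v; apply/implyP; rewrite !inE => /andP [vN /andP [vV _]].
    have := st v vN; rewrite inE => /andP [sr /eqP ps].
    by rewrite hs //= (negbTE sr) ps vV vN eqxx.
  - apply/forallP => a; apply/implyP; rewrite !inE => /andP [aA /andP [aV _]].
    apply/subsetP => w wc; rewrite inE (hc a w aA aV wc) /=.
    move: wc; rewrite inE => /andP [wr /eqP ->]; rewrite (negbTE wr) /=.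
    have aN : a \notin N.
      by apply/negP => aN; move: NA => /setP /(_ a); rewrite !inE aN aA.
    by rewrite aV (negbTE aN).
have := hmin S x cS xV; rewrite inE xV (negbTE xr) /= => /andP [pV H].
by split=> // pN; move: H; rewrite pN => /eqP.
Qed.

Lemma not_both (V : finType) (N A : {set V}) x : N :&: A = set0 -> x \in N -> x \in A -> False.
Proof. by move=> NA xN xA; move: NA => /setP /(_ x); rewrite !inE xN xA. Qed.

Theorem mainTheorem4 (R : realFieldType) (V : finType) (r : V) (p : V -> V)
  (N A : {set V}) (sigma : V -> V) :
  game_tree r p N A ->
  strategy r p N sigma ->
  (\sum_(a in Asigma r p N A sigma) (beta R r p N A a)^-1 = 1)%R.
Proof.
move=> G st.
have G' := G; case: G' => [rt [rN [NA [int [Nch Ach]]]]].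
have rs := Vs_r r p N A sigma.
have Vpar : forall x, x \in Vsigma r p N A sigma -> x != r ->
  p x \in Vsigma r p N A sigma /\ (p x \in N -> x = sigma (p x)).
  by move=> x; apply: Vs_parent.
have Vsig : forall v, v \in N -> v \in Vsigma r p N A sigma -> sigma v \in Vsigma r p N A sigma.
  by move=> v; apply: Vs_sigma.
have Vch : forall a w, a \in A -> a \in Vsigma r p N A sigma -> w \in children r p a ->
  w \in Vsigma r p N A sigma by move=> a w; apply: Vs_child.
rewrite /Asigma.
move: (Vsigma r p N A sigma) rs Vpar Vsig Vch => Vs rs Vpar Vsig Vch.
set As := A :&: Vs.
set Ns := N :&: Vs.
set h := fun x => ((beta R r p N A x)^-1)%R.
have hr : h r = 1%R by rewrite /h beta_r invr1.
have F1 : forall a, a \in As -> [/\ a != r, p a \in Ns & a = sigma (p a)].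
  move=> a; rewrite !inE => /andP [aA aV].
  have ar : a != r by apply/eqP => E; apply: (not_both NA rN); rewrite -E.
  have [pV pS] := Vpar a aV ar.
  have pN : p a \in N.
    have := parent_internal G ar; rewrite inE => /orP [//|pA].
    have := Ach _ pA => /subsetP /(_ a); rewrite !inE ar eqxx /= => /(_ isT) /orP [aN|].
      by case: (not_both NA aN aA).
    have : a \in N :|: A by rewrite inE aA orbT.
    by rewrite int => /negbTE ->.
  split => //; [by rewrite pN pV | exact: pS].
have F2 : forall w, (w \in Ns) && (w != r) -> p w \in As.
  move=> w; rewrite !inE => /andP [/andP [wN wV] wr].
  have [pV _] := Vpar w wV wr.
  rewrite pV andbT.
  have := parent_internal G wr; rewrite inE => /orP [pN|//].
  have [chA _] := Nch _ pN; have := subsetP chA w; rewrite inE wr eqxx /= => /(_ isT) wA.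
  by case: (not_both NA wN wA).
have F3 : forall v, v \in Ns -> sigma v \in As /\ p (sigma v) = v.
  move=> v; rewrite inE => /andP [vN vV].
  have := st v vN; rewrite inE => /andP [sr /eqP ps].
  have [chA _] := Nch _ vN.
  have sA : sigma v \in A by apply: (subsetP chA); apply: st.
  by rewrite inE sA Vsig.
have S1 : forall a, a \in As ->
    h a = (h (p a) - \sum_(w in children r p a :&: N) h w)%R.
  move=> a aAs; have [ar _ _] := F1 a aAs.
  have aA : a \in A by move: aAs; rewrite inE => /andP [].
  have hb : beta R r p N A (p a) != 0%R.
    exact: (@beta_fuel_ne0 R V r p N A #|V| G (p a) (parent_internal G ar)).
  have ba : beta R r p N A a = ((mval r p N A a)%:R * beta R r p N A (p a))%R.
    by rewrite beta_rec // aA.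
  have hw : forall w, w \in children r p a :&: N ->
      h w = ((mval r p N A w)%:R * (beta R r p N A a)^-1)%R.
    move=> w; rewrite !inE => /andP [/andP [wr /eqP pw] wN].
    have wA : w \notin A by apply/negP => wA; apply: (not_both NA wN wA).
    rewrite /h beta_rec // (negbTE wA) pw invfM invrK mulrC.
    by [].
  rewrite (eq_bigr _ hw) -mulr_suml -natr_sum /h ba.
  move: (m_rec G aA) ba => ma _; rewrite ma natrD.
  set M := ((\sum_(i in _) _)%:R : R)%R.
  have hM : (1 + M)%R != 0%R.
    by rewrite paddr_eq0 ?ler01 ?ler0n // oner_eq0.
  move: hb; set b := beta R r p N A (p a) => hb.
  field; by rewrite hM hb.
transitivity (\sum_(a in As) h a)%R; first by [].
rewrite (eq_bigr _ S1) sumrB.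
have E1 : (\sum_(a in As) h (p a) = \sum_(v in Ns) h v)%R.
  rewrite -(big_imset h) /=; last first.
    move=> a b aA bA E; have [_ _ ->] := F1 a aA; have [_ _ ->] := F1 b bA.
    by rewrite E.
  apply: eq_bigl => v; apply/imsetP/idP.
    by move=> [a aA ->]; have [_ -> _] := F1 a aA.
  by move=> vN; have [sA ps] := F3 v vN; exists (sigma v).
have E2 : (\sum_(a in As) \sum_(w in children r p a :&: N) h w
    = \sum_(w in Ns | w != r) h w)%R.
  rewrite [RHS](partition_big p (fun a => a \in As)) /=; last by move=> w hw; apply: F2.
  apply: eq_bigr => a aAs; apply: eq_bigl => w.
  apply/idP/idP.
    rewrite !inE => /andP [/andP [wr /eqP pw] wN].
    have aA : a \in A by move: aAs; rewrite inE => /andP [].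
    have aV : a \in Vs by move: aAs; rewrite inE => /andP [].
    rewrite wN wr pw eqxx (Vch a w aA aV) //.
    by rewrite inE wr pw eqxx.
  rewrite -andbA => /and3P [wNs wr /eqP pw].
  by move: wNs; rewrite !inE wr pw eqxx => /andP [-> _].
rewrite E1 E2 (bigD1 r) /=; last by rewrite inE rN rs.
by rewrite hr addrK.
Qed.
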